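(* For the measure $\mu$ defined by $\int_{\mathbb{L}}\varphi\,\mathrm{d}\mu=\mathbb{E}[\varphi(\Lambda(X,Y))/d(X,Y)^2]$, with $X,Y$ independent non-backtracking random walks on $\mathbb{T}$ from the root, one has $$\mu\langle x,y\rangle=\tfrac{8}{9}\cdot 2^{-d(x,y)}\quad\text{for all vertices }x\neq y\text{ of }\mathbb{T}.$$
   Context: $\mathbb{T}$ is the $3$-regular tree with graph distance $d$ and root $\varnothing$. Rays are infinite non-backtracking paths from $\varnothing$, and $\partial\mathbb{T}$ is the set of rays. For distinct rays, $\xi\wedge\eta$ is their last common vertex, and the metric on $\partial\mathbb{T}$ is $d(\xi,\eta)=2^{-d(\varnothing,\xi\wedge\eta)}$. $\Lambda(\xi,\eta)$ is the bi-infinite geodesic (line) with ends $\xi,\eta$, and $\mathbb{L}$ is the set of lines. $\langle x,y\rangle$ is the set of lines passing through both $x$ and $y$. A non-backtracking random walk from the root is viewed as a random element of $\partial\mathbb{T}$. *)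

(* Defs.v *)
From HB Require Import structures.
From mathcomp Require Import all_boot all_order all_algebra.
From mathcomp Require Import all_classical all_reals all_analysis.
Set Implicit Arguments. Unset Strict Implicit. Unset Printing Implicit Defensive.
Import Order.TTheory GRing.Theory Num.Theory.
Local Open Scope ring_scope.

(* The 3-regular tree T: vertices are reduced words over the alphabet 'I_3
   (no two consecutive letters equal), i.e. the Cayley graph of Z2*Z2*Z2.
   The root is the empty word; w is adjacent to w ++ [:: i] when reduced. *)
Definition reduced (w : seq 'I_3) : bool := sorted (fun a b : 'I_3 => a != b) w.

Fixpoint lcp (u v : seq 'I_3) : nat :=
  match u, v with
  | a :: u', b :: v' => if a == b then (lcp u' v').+1 else 0%N
  | _, _ => 0%N
  end.

Definition dist (u v : seq 'I_3) : nat := (size u + size v - 2 * lcp u v)%N.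

(* A ray (infinite non-backtracking path from the root) is encoded by the
   infinite sequence of its letters; its vertex at depth m is [ray_prefix xi m]. *)
Definition is_ray (xi : nat -> 'I_3) : Prop := forall n, xi n != xi n.+1.
Definition ray_prefix (xi : nat -> 'I_3) (m : nat) : seq 'I_3 := mkseq xi m.

(* depth d(root, xi /\ eta) of the last common vertex of two distinct rays *)
Definition meet_depth (xi eta : nat -> 'I_3) : nat :=
  match pselect (exists n, xi n != eta n) with
  | left h => ex_minn (P := fun n => xi n != eta n) (ex_intro _ _ (proj2_sig (cid h)))
  | right _ => 0%N
  end.

Definition in_line (v : seq 'I_3) (xi eta : nat -> 'I_3) : Prop :=
  exists m, (meet_depth xi eta <= m)%N /\ (v = ray_prefix xi m \/ v = ray_prefix eta m).

(* phi(Lambda(xi,eta)) / d(xi,eta)^2 with phi the indicator of <x,y>,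
   where d(xi,eta) = 2^(-meet_depth); set to 0 on the null event xi = eta. *)
Definition mu_integrand (R : realType) (x y : seq 'I_3) (xi eta : nat -> 'I_3)
  : \bar R :=
  if `[< exists n, xi n != eta n >] && `[< in_line x xi eta >]
     && `[< in_line y xi eta >]
  then ((4 : R) ^+ meet_depth xi eta)%:E else 0%E.

(* probability that the first (size w) steps of a non-backtracking random walk
   from the root follow the word w: 1/3 for the first step, 1/2 afterwards *)
Definition walk_prob (R : realType) (w : seq 'I_3) : R :=
  if reduced w then
    (if w is [::] then 1 else 3^-1 * 2 ^- (size w).-1)
  else 0.

(* Main.v *)
Require Import Defs.
From HB Require Import structures.
From mathcomp Require Import all_boot all_order all_algebra.
From mathcomp Require Import all_classical all_reals all_analysis.
From mathcomp Require Import ring lra zify measurable_realfun.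
Import Order.TTheory GRing.Theory Num.Theory.
Local Open Scope classical_set_scope.
Local Open Scope ring_scope.
Set Implicit Arguments. Unset Strict Implicit.


Definition ext (xi : nat -> 'I_3) (u : seq 'I_3) : Prop := ray_prefix xi (size u) = u.

Lemma extP xi u : ext xi u <-> forall i, (i < size u)%N -> xi i = nth ord0 u i.
Proof.
rewrite /ext /ray_prefix; split.
- by move=> h i hi; rewrite -[in RHS]h nth_mkseq.
- move=> h; apply: (@eq_from_nth _ ord0); rewrite ?size_mkseq // => i hi.
  by rewrite nth_mkseq // h.
Qed.

Lemma ext_take xi u k : ext xi u -> ext xi (take k u).
Proof.
move=> /extP h; have [hk|hk] := leqP (size u) k; first by rewrite take_oversize //; apply/extP.
apply/extP => i; rewrite size_take hk => hi.
by rewrite nth_take // h // (ltn_trans hi hk).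
Qed.

Lemma meet_eq xi eta k : (forall i, (i < k)%N -> xi i = eta i) -> xi k != eta k ->
  meet_depth xi eta = k.
Proof.
move=> hlt hk; rewrite /meet_depth; case: pselect => [h|h]; last by exfalso; apply: h; exists k.
case: ex_minnP => m hm hmin.
apply/eqP; rewrite eqn_leq hmin // leqNgt; apply/negP => /hlt e.
by rewrite e eqxx in hm.
Qed.

Lemma meet_spec xi eta : (exists n, xi n != eta n) ->
  (forall i, (i < meet_depth xi eta)%N -> xi i = eta i) /\
  xi (meet_depth xi eta) != eta (meet_depth xi eta).
Proof.
move=> ex; rewrite /meet_depth; case: pselect => [h|//]; case: ex_minnP => m hm hmin.
split=> // i hi; apply/eqP; apply: contraTT hi => /hmin; by rewrite leqNgt.
Qed.

Lemma meet_sym xi eta : meet_depth xi eta = meet_depth eta xi.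
Proof.
case: (pselect (exists n, xi n != eta n)) => ex.
- have [h1 h2] := meet_spec ex; apply/esym/meet_eq; last by rewrite eq_sym.
  by move=> i /h1.
- rewrite /meet_depth; case: pselect => [//|_]; case: pselect => [[n hn]|//].
  by exfalso; apply: ex; exists n; rewrite eq_sym.
Qed.

Lemma in_lineP v xi eta : in_line v xi eta <->
  (meet_depth xi eta <= size v)%N /\ (ext xi v \/ ext eta v).
Proof.
rewrite /in_line /ext; split.
- move=> [m [hm [->|->]]]; rewrite /ray_prefix size_mkseq; split => //; by [left|right].
- move=> [hm [h|h]]; exists (size v); split => //; by [left; rewrite h|right; rewrite h].
Qed.

Lemma mu_sym_xy (R : realType) x y xi eta : mu_integrand R x y xi eta = mu_integrand R y x xi eta.
Proof. by rewrite /mu_integrand andbAC. Qed.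

Lemma mu_sym_ray (R : realType) x y xi eta : mu_integrand R x y xi eta = mu_integrand R x y eta xi.
Proof.
rewrite /mu_integrand meet_sym.
have e1 : (exists n, xi n != eta n) = (exists n, eta n != xi n).
  by apply/propext; split=> -[n h]; exists n; rewrite eq_sym.
have e2 v : in_line v xi eta = in_line v eta xi.
  apply/propext; rewrite !in_lineP meet_sym; split=> -[? h]; split=> //; tauto.
by rewrite e1 !e2.
Qed.

Lemma lcp_spec u v : [/\ (lcp u v <= size u)%N, (lcp u v <= size v)%N,
  take (lcp u v) u = take (lcp u v) v &
  ((lcp u v < size u)%N -> (lcp u v < size v)%N -> nth ord0 u (lcp u v) != nth ord0 v (lcp u v))].
Proof.
elim: u v => [|a u IH] [|b v] //=.
case: eqP => [<-|ne] //=; last by split => // _ _; apply/eqP.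
by have [h1 h2 h3 h4] := IH v; split => //; rewrite h3.
Qed.

Lemma lcp_sym u v : lcp u v = lcp v u.
Proof. by elim: u v => [|a u IH] [|b v] //=; rewrite eq_sym; case: eqP => // _; rewrite IH. Qed.

Lemma lcp_take a y : (a <= size y)%N -> lcp (take a y) y = a.
Proof.
elim: y a => [|b y IH] [|a] //= ha; by rewrite eqxx IH.
Qed.

Lemma dist_sym x y : dist x y = dist y x.
Proof. by rewrite /dist addnC lcp_sym. Qed.

Section Pointwise.
Variable R : realType.

Lemma ext_nth xi u i : ext xi u -> (i < size u)%N -> xi i = nth ord0 u i.
Proof. by move=> /extP h /h. Qed.

Lemma ext_conflict xi x y c : ext xi x -> ext xi y -> (c < size x)%N -> (c < size y)%N ->
  nth ord0 x c != nth ord0 y c -> False.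
Proof.
move=> ex ey hx hy; by rewrite -(ext_nth ex hx) -(ext_nth ey hy) eqxx.
Qed.

Lemma pw1A x y c xi eta : (c < size x)%N -> (c < size y)%N -> nth ord0 x c != nth ord0 y c ->
  take c x = take c y -> ext xi x -> ext eta y -> mu_integrand R x y xi eta = ((4:R)^+c)%:E.
Proof.
move=> hx hy hne ht ex ey.
have ec : meet_depth xi eta = c.
  apply: meet_eq.
  - move=> i hi; rewrite (ext_nth ex (ltn_trans hi hx)) (ext_nth ey (ltn_trans hi hy)).
    by rewrite -(nth_take _ hi) ht nth_take.
  - by rewrite (ext_nth ex hx) (ext_nth ey hy).
have hex : exists n, xi n != eta n.
  by exists c; rewrite (ext_nth ex hx) (ext_nth ey hy).
rewrite /mu_integrand ec asboolT // asboolT; last first.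
  by apply/in_lineP; rewrite ec; split; [exact: ltnW|left].
rewrite asboolT //.
by apply/in_lineP; rewrite ec; split; [exact: ltnW|right].
Qed.

Lemma pw1N x y c xi eta : (c < size x)%N -> (c < size y)%N -> nth ord0 x c != nth ord0 y c ->
  ~ (ext xi x /\ ext eta y) -> ~ (ext xi y /\ ext eta x) -> mu_integrand R x y xi eta = 0%E.
Proof.
move=> hx hy hne nA nB; rewrite /mu_integrand; case: ifP => // /andP[/andP[_ /asboolP hlx] /asboolP hly].
move: hlx hly => /in_lineP [_ [h1|h1]] /in_lineP [_ [h2|h2]].
- by case: (ext_conflict h1 h2 hx hy hne).
- by case: nA.
- by case: nB.
- by case: (ext_conflict h1 h2 hx hy hne).
Qed.

Lemma pw1 x y c xi eta : (c < size x)%N -> (c < size y)%N -> nth ord0 x c != nth ord0 y c ->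
  take c x = take c y ->
  mu_integrand R x y xi eta =
   ((4:R)^+c * ((`[< ext xi x /\ ext eta y >])%:R + (`[< ext xi y /\ ext eta x >])%:R))%:E.
Proof.
move=> hx hy hne ht.
case: (asboolP (ext xi x /\ ext eta y)) => hA.
  rewrite asboolF; last by move=> [h1 _]; case: (ext_conflict hA.1 h1 hx hy hne).
  by rewrite (pw1A hx hy hne ht hA.1 hA.2) addr0 mulr1.
case: (asboolP (ext xi y /\ ext eta x)) => hB.
  rewrite mu_sym_xy (pw1A hy hx _ (esym ht) hB.1 hB.2) ?add0r ?mulr1 //.
  by rewrite eq_sym.
by rewrite (pw1N hx hy hne hA hB) !add0r mulr0.
Qed.

Definition hit (xi eta : nat -> 'I_3) y k : Prop :=
  ext xi y /\ ext eta (take k y) /\ ~ ext eta (take k.+1 y).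

Definition S2 (x y : seq 'I_3) xi eta : R :=
  \sum_(k < (size x).+1) (4:R)^+k * ((`[< hit xi eta y k >])%:R + (`[< hit eta xi y k >])%:R).

Lemma sum_delta n j (F : nat -> R) :
  \sum_(k < n) F k * ((k : nat) == j)%:R = if (j < n)%N then F j else 0.
Proof.
elim: n => [|n IH]; first by rewrite big_ord0.
rewrite big_ord_recr /= IH ltnS.
by case: (ltngtP j n) => h /=; rewrite ?mulr0 ?addr0 ?mulr1 ?add0r // h.
Qed.

Lemma pw2_iii x y xi eta : x = take (size x) y -> (size x < size y)%N ->
  ext xi y -> ~ ext eta y -> mu_integrand R x y xi eta = (S2 x y xi eta)%:E.
Proof.
move=> hxy hsz exy ney.
have [i [hi ne]] : exists i, (i < size y)%N /\ eta i != nth ord0 y i.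
  case: (boolP [exists i : 'I_(size y), eta i != nth ord0 y i]) => [/existsP [i h]|/existsPn h].
    by exists i.
  exfalso; apply: ney; apply/extP => i hi; by have := h (Ordinal hi); rewrite negbK => /eqP.
have ex : exists n, xi n != eta n by exists i; rewrite (ext_nth exy hi) eq_sym.
have [hlt hj] := meet_spec ex; set j := meet_depth xi eta in hlt hj *.
have hji : (j <= i)%N.
  rewrite leqNgt; apply/negP => /hlt e; by rewrite -e (ext_nth exy hi) eqxx in ne.
have hjb : (j < size y)%N by exact: leq_ltn_trans hji hi.
have hitE k : (k < size y)%N -> `[< hit xi eta y k >] = (k == j).
  move=> hk; apply/asboolP/eqP.
  - move=> [_ [h1 h2]]; apply/eqP; rewrite eqn_leq; apply/andP; split.
    + rewrite leqNgt; apply/negP => hjk.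
      have hjs : (j < size (take k y))%N by rewrite size_take hk.
      move: hj; rewrite (ext_nth h1 hjs) nth_take // (ext_nth exy hjb) eqxx //.
    + rewrite leqNgt; apply/negP => hkj; apply: h2; apply/extP => l.
      rewrite size_take; case: ifP => hif hl.
      * rewrite nth_take // -hlt; last by exact: leq_trans hl hkj.
        by rewrite (ext_nth exy (leq_trans hl (leq_trans hkj (ltnW hjb)))).
      * have hlk : (l < k.+1)%N by apply: (leq_trans hl); rewrite leqNgt hif.
        rewrite nth_take // -hlt ?(ext_nth exy hl) //.
        exact: leq_trans hlk hkj.
  - move=> ->; split=> //; split.
    + apply/extP => l; rewrite size_take hjb => hl.
      by rewrite nth_take // -hlt // (ext_nth exy (ltn_trans hl hjb)).
    + move=> /extP h; move: hj.
      have hjs : (j < size (take j.+1 y))%N by rewrite size_take; case: ifP.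
      by rewrite (h j hjs) nth_take // (ext_nth exy hjb) eqxx.
have hitF k : `[< hit eta xi y k >] = false by apply/asboolP => -[].
have eS : S2 x y xi eta = \sum_(k < (size x).+1) (4:R)^+k * ((k : nat) == j)%:R.
  apply: eq_bigr => k _; rewrite hitF addr0 hitE //.
  exact: leq_ltn_trans (ltnSE (ltn_ord k)) hsz.
have hly : in_line y xi eta by apply/in_lineP; split; [exact: ltnW|left].
have hlx : `[< in_line x xi eta >] = (j < (size x).+1)%N.
  apply/asboolP/idP.
  - by move/in_lineP => [h _]; rewrite ltnS.
  - move=> h; apply/in_lineP; split; first by rewrite -ltnS.
    by left; rewrite hxy; apply: ext_take.
rewrite eS sum_delta /mu_integrand -/j (asboolT ex) (asboolT hly) andbT hlx.
by case: (j < (size x).+1)%N.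
Qed.

Lemma S2_sym x y xi eta : S2 x y xi eta = S2 x y eta xi.
Proof. by apply: eq_bigr => k _; rewrite addrC. Qed.

Lemma pw2 x y xi eta : x = take (size x) y -> (size x < size y)%N ->
  mu_integrand R x y xi eta = (S2 x y xi eta)%:E.
Proof.
move=> hxy hsz.
case: (pselect (ext xi y)) => exy; case: (pselect (ext eta y)) => ey.
- have hz k : (k < (size x).+1)%N -> `[< hit xi eta y k >] = false /\ `[< hit eta xi y k >] = false.
    move=> hk; split; apply/asboolP => -[_ [_ []]]; apply: ext_take; assumption.
  rewrite /S2 big1; last by move=> k _; have [-> ->] := hz k (ltn_ord k); rewrite addr0 mulr0.
  rewrite /mu_integrand; case: ifP => // /andP[/andP[/asboolP ex /asboolP hlx] _].
  move: hlx => /in_lineP [hm _]; have [_ hj] := meet_spec ex.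
  have hjb : (meet_depth xi eta < size y)%N by exact: leq_ltn_trans hm hsz.
  by rewrite (ext_nth exy hjb) (ext_nth ey hjb) eqxx in hj.
- exact: pw2_iii.
- by rewrite mu_sym_ray S2_sym; apply: pw2_iii.
- rewrite /S2 big1; last first.
    move=> k _; rewrite !asboolF ?addr0 ?mulr0 //; by move=> [].
  rewrite /mu_integrand; case: ifP => // /andP[_ /asboolP /in_lineP [_ []]] //.
Qed.

End Pointwise.

Lemma sum_wp (R : realType) u : \sum_(i < 3) walk_prob R (rcons u i) = walk_prob R u.
Proof.
rewrite /walk_prob; case: u => [|a u].
  rewrite /= (eq_bigr (fun=> 3^-1 : R)); last by move=> i _; rewrite expr0 invr1 mulr1.
  rewrite sumr_const card_ord /=. by field.
set K := (3^-1 / 2 ^+ (size u).+1 : R).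
have ew (i : 'I_3) : (if reduced (rcons (a :: u) i)
     then match rcons (a :: u) i with | [::] => 1 | _ :: _ => 3^-1 / 2 ^+ (size (rcons (a :: u) i)).-1 end
     else 0) = if path (fun a0 b : 'I_3 => a0 != b) a u && (last a u != i) then K else 0.
  by rewrite /reduced /= rcons_path size_rcons.
rewrite (eq_bigr _ (fun i _ => ew i)) /reduced /=.
case: (path _ a u) => /=; last by rewrite big1.
rewrite -big_mkcond /= sumr_const.
have -> : #|[pred i | last a u != i]| = 2%N.
  transitivity #|predC1 (last a u)|; last by rewrite cardC1 card_ord.
  by apply: eq_card => i; rewrite !inE eq_sym.
rewrite /K exprS -mulr_natr. field. by rewrite expf_neq0.
Qed.

Section Meas.
Variables (R : realType) (d : measure_display) (Omega : measurableType d)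
  (P : probability Omega R).

Lemma bigsetU_memP (I : eqType) (s : seq I) (F : I -> set Omega) w :
  (\big[setU/set0]_(i <- s) F i) w <-> exists2 i, i \in s & F i w.
Proof.
elim: s => [|a s IH]; first by rewrite big_nil; split=> // -[].
rewrite big_cons; split.
- move=> [h|/IH [i hi hF]]; first by exists a => //; rewrite mem_head.
  by exists i => //; rewrite in_cons hi orbT.
- move=> [i]; rewrite in_cons => /orP [/eqP ->|hi] hF; first by left.
  by right; apply/IH; exists i.
Qed.

Lemma measurable_ext (Z : Omega -> nat -> 'I_3)
  (HZ : forall n (i : 'I_3), measurable [set w | Z w n = i]) u :
  measurable [set w | ext (Z w) u].
Proof.
rewrite (_ : [set w | ext (Z w) u] =
   \bigcap_(i in [set i | (i < size u)%N]) [set w | Z w i = nth ord0 u i]).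
  by apply: bigcap_measurableType => i _; exact: HZ.
apply/seteqP; split => w /=.
- by move=> h i hi; exact: ext_nth h hi.
- by move=> h; apply/extP => i hi; exact: h.
Qed.

Lemma split3 (Z : Omega -> nat -> 'I_3) n E
  (HZ : forall (i : 'I_3), measurable [set w | Z w n = i]) : measurable E ->
  P E = \sum_(i < 3) P (E `&` [set w | Z w n = i]).
Proof.
move=> mE.
rewrite -measure_bigsetU_ord //.
- congr (P _); apply/seteqP; split => w.
  + by move=> Ew; apply/bigsetU_memP; exists (Z w n) => //; rewrite mem_index_enum.
  + by move/bigsetU_memP => [i _ []].
- by move=> i; apply: measurableI.
- by move=> i j _ _ [w [[_ <-] [_ <-]]].
Qed.

Lemma ext_rcons xi u i : ext xi (rcons u i) <-> ext xi u /\ xi (size u) = i.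
Proof.
rewrite /ext /ray_prefix size_rcons mkseqS; split => [/rcons_inj [-> ->]|[-> ->]] //.
Qed.

Definition EXY (X Y : Omega -> nat -> 'I_3) u v := [set w | ext (X w) u /\ ext (Y w) v].

Lemma G_half (X Y : Omega -> nat -> 'I_3)
  (HX : forall n (i : 'I_3), measurable [set w | X w n = i])
  (HY : forall n (i : 'I_3), measurable [set w | Y w n = i])
  (Hlaw : forall u v : seq 'I_3, size u = size v ->
     P (EXY X Y u v) = (walk_prob R u * walk_prob R v)%:E) m :
  forall u v, size v = (size u + m)%N ->
  P (EXY X Y u v) = (walk_prob R u * walk_prob R v)%:E.
Proof.
elim: m => [|m IH] u v h; first by apply: Hlaw; rewrite addn0 in h.
rewrite (@split3 X (size u)) //; last first.
  by apply: measurableI; apply: measurable_ext.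
transitivity (\sum_(i < 3) (walk_prob R (rcons u i) * walk_prob R v)%:E).
  apply: eq_bigr => i _; rewrite -IH; last by rewrite size_rcons addSnnS.
  congr (P _); apply/seteqP; split => w /=.
  - by move=> [[h1 h2] h3]; split => //; apply/ext_rcons.
  - by move=> [/ext_rcons [h1 h3] h2].
by rewrite sumEFin -big_distrl /= sum_wp.
Qed.

Lemma Hlaw_swap (X Y : Omega -> nat -> 'I_3)
  (Hlaw : forall u v : seq 'I_3, size u = size v ->
     P (EXY X Y u v) = (walk_prob R u * walk_prob R v)%:E) :
  forall u v : seq 'I_3, size u = size v ->
     P (EXY Y X u v) = (walk_prob R u * walk_prob R v)%:E.
Proof.
move=> u v e; rewrite (_ : EXY Y X u v = EXY X Y v u) ?Hlaw // 1?mulrC //.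
by apply/seteqP; split => w [? ?].
Qed.

Lemma Gfull (X Y : Omega -> nat -> 'I_3)
  (HX : forall n (i : 'I_3), measurable [set w | X w n = i])
  (HY : forall n (i : 'I_3), measurable [set w | Y w n = i])
  (Hlaw : forall u v : seq 'I_3, size u = size v ->
     P (EXY X Y u v) = (walk_prob R u * walk_prob R v)%:E) u v :
  P (EXY X Y u v) = (walk_prob R u * walk_prob R v)%:E.
Proof.
case: (leqP (size u) (size v)) => h.
  by apply: (G_half HX HY Hlaw (m := (size v - size u)%N)); rewrite subnKC.
rewrite (_ : EXY X Y u v = EXY Y X v u); last by apply/seteqP; split => w [? ?].
rewrite (G_half HY HX (Hlaw_swap Hlaw) (m := (size u - size v)%N)) 1?mulrC //.
by rewrite subnKC // ltnW.
Qed.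

Lemma int_indT (c : R) (Q : Omega -> Prop) : 0 <= c -> measurable [set w | Q w] ->
  (\int[P]_w (c%:E * ((`[< Q w >])%:R)%:E) = c%:E * P [set w | Q w])%E.
Proof.
move=> c0 mQ.
transitivity (\int[P]_w (c%:E * (\1_[set w | Q w] w)%:E))%E; first by [].
rewrite ge0_integralZl_EFin //.
- by rewrite integral_indic // setIT.
by apply/measurable_EFinP; exact: measurable_indic.
Qed.

Lemma meas_term (c : R) (Q : Omega -> Prop) : measurable [set w | Q w] ->
  measurable_fun setT (fun w => (c%:E * ((`[< Q w >])%:R)%:E)%E).
Proof.
move=> mQ.
have -> : (fun w => (c%:E * ((`[< Q w >])%:R)%:E)%E) =
   (fun w => (c * \1_[set w | Q w] w)%:E) by apply/funext => w; rewrite EFinM.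
apply/measurable_EFinP; apply: measurable_funM => //; exact: measurable_indic.
Qed.

Lemma term_ge0 (c : R) (Q : Omega -> Prop) w : 0 <= c -> (0 <= c%:E * ((`[< Q w >])%:R)%:E)%E.
Proof. by move=> c0; rewrite -EFinM lee_fin mulr_ge0. Qed.

End Meas.

Section Arith.
Variable R : realType.

Lemma reduced_take y k : reduced y -> reduced (take k y).
Proof. by case: y => [|b y] //; case: k => [|k] //= h; exact: take_path. Qed.

Lemma wp_take y k : reduced y -> (k <= size y)%N ->
  walk_prob R (take k y) = if k is k'.+1 then 3^-1 / 2 ^+ k' else 1.
Proof.
move=> hy hk; rewrite /walk_prob reduced_take //.
case: k hk => [|k] hk; first by rewrite take0.
case: y hy hk => [|b y] //= _ hk; by rewrite size_takel.
Qed.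

Lemma wp_full y : reduced y -> walk_prob R y = if size y is k'.+1 then 3^-1 / 2 ^+ k' else 1.
Proof. by move=> hy; rewrite -{1}(take_size y) wp_take. Qed.

Lemma sumD y a : reduced y -> (a < size y)%N ->
  \sum_(k < a.+1) (4:R) ^+ k * (walk_prob R (take k y) - walk_prob R (take k.+1 y)) = 2/3 * 2 ^+ a.
Proof.
move=> hy; elim: a => [|a IH] ha.
  rewrite big_ord_recr big_ord0 /= !wp_take //.
  by rewrite expr0 add0r mul1r; field.
rewrite big_ord_recr /= IH; last exact: ltnW.
rewrite !wp_take //; last exact: ltnW.
rewrite (_ : (4:R) = 2 * 2); last by field.
rewrite exprMn !exprS; field; by rewrite expf_neq0.
Qed.

Lemma arith2 y a : reduced y -> (a < size y)%N ->
  \sum_(k < a.+1) ((4:R) ^+ k * (walk_prob R y * walk_prob R (take k y) - walk_prob R y * walk_prob R (take k.+1 y))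
     + (4:R) ^+ k * (walk_prob R y * walk_prob R (take k y) - walk_prob R y * walk_prob R (take k.+1 y)))
  = 8/9 * 2 ^- (size y - a).
Proof.
move=> hy ha.
rewrite (eq_bigr (fun k : 'I_a.+1 => (2 * walk_prob R y) * ((4:R) ^+ k * (walk_prob R (take k y) - walk_prob R (take k.+1 y))))); last by move=> k _; ring.
rewrite -big_distrr /= sumD // wp_full //.
have [p ep] : exists p, size y = (a + p).+1 by exists (size y - a.+1)%N; lia.
rewrite ep (_ : ((a + p).+1 - a = p.+1)%N); last by lia.
rewrite exprD !exprS; field; by rewrite ?expf_neq0.
Qed.

Lemma arith1 x y c : reduced x -> reduced y -> (c < size x)%N -> (c < size y)%N ->
  (4:R) ^+ c * (walk_prob R x * walk_prob R y + walk_prob R y * walk_prob R x)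
  = 8/9 * 2 ^- (size x + size y - 2 * c).
Proof.
move=> hx hy cx cy; rewrite !wp_full //.
have [p ep] : exists p, size x = (c + p).+1 by exists (size x - c.+1)%N; lia.
have [q eq] : exists q, size y = (c + q).+1 by exists (size y - c.+1)%N; lia.
rewrite ep eq (_ : ((c + p).+1 + (c + q).+1 - 2 * c = (p + q).+2)%N); last by lia.
rewrite (_ : (4:R) = 2 * 2); last by field.
rewrite exprMn !exprS !exprD; field; by rewrite ?expf_neq0.
Qed.

End Arith.

Section Main.
Variables (R : realType) (d : measure_display) (Omega : measurableType d)
  (P : probability Omega R).

Lemma P_hit (X Y : Omega -> nat -> 'I_3)
  (HX : forall n (i : 'I_3), measurable [set w | X w n = i])
  (HY : forall n (i : 'I_3), measurable [set w | Y w n = i])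
  (Hlaw : forall u v : seq 'I_3, size u = size v ->
     P (EXY X Y u v) = (walk_prob R u * walk_prob R v)%:E) y k :
  P [set w | hit (X w) (Y w) y k] =
  (walk_prob R y * walk_prob R (take k y) - walk_prob R y * walk_prob R (take k.+1 y))%:E.
Proof.
have mE u v : measurable (EXY X Y u v).
  by apply: measurableI; apply: measurable_ext.
have -> : [set w | hit (X w) (Y w) y k] = EXY X Y y (take k y) `\` EXY X Y y (take k.+1 y).
  apply/seteqP; split => w /=.
  - by move=> [h1 [h2 h3]]; split => // -[_ h4].
  - by move=> [[h1 h2] h3]; split => //; split => // h4; apply: h3.
rewrite measureD //.
rewrite setIidr; last first.
  move=> w [h1 h2]; split => //; rewrite -(take_takel y (leqnSn k)); exact: ext_take.
  change ((P (EXY X Y y (take k y)) - P (EXY X Y y (take k.+1 y)))%E =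
    (walk_prob R y * walk_prob R (take k y) - walk_prob R y * walk_prob R (take k.+1 y))%:E).
  by rewrite (Gfull HX HY Hlaw) (Gfull HX HY Hlaw) EFinB.
change (P (EXY X Y y (take k y)) < +oo)%E.
by rewrite (Gfull HX HY Hlaw) ltry.
Qed.

Variables (X Y : Omega -> nat -> 'I_3)
  (HXmeas : forall n (i : 'I_3), measurable [set w | X w n = i])
  (HYmeas : forall n (i : 'I_3), measurable [set w | Y w n = i])
  (Hlaw : forall u v : seq 'I_3, size u = size v ->
     P (EXY X Y u v) = (walk_prob R u * walk_prob R v)%:E).

Lemma mQ u v : measurable [set w | ext (X w) u /\ ext (Y w) v].
Proof. by apply: measurableI; apply: measurable_ext. Qed.

Lemma mQ' u v : measurable [set w | ext (Y w) u /\ ext (X w) v].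
Proof. by apply: measurableI; apply: measurable_ext. Qed.

Lemma case1 x y c : reduced x -> reduced y -> (c < size x)%N -> (c < size y)%N ->
  nth ord0 x c != nth ord0 y c -> take c x = take c y ->
  (\int[P]_w mu_integrand R x y (X w) (Y w) =
    ((8/9 : R) * 2 ^- (size x + size y - 2 * c))%:E)%E.
Proof.
move=> hx hy cx cy hne ht.
under eq_integral => w _ do rewrite (pw1 R _ _ cx cy hne ht) mulrDr EFinD !EFinM.
rewrite ge0_integralD //; try (by move=> w _; apply: term_ge0; apply: exprn_ge0);
  try (by apply: meas_term; exact: mQ).
rewrite !int_indT //; try exact: mQ; try (by apply: exprn_ge0).
rewrite (Gfull HXmeas HYmeas Hlaw) (Gfull HXmeas HYmeas Hlaw) -!EFinM -EFinD -mulrDr.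
by rewrite arith1.
Qed.

Lemma case2 x y : reduced y -> x = take (size x) y -> (size x < size y)%N ->
  (\int[P]_w mu_integrand R x y (X w) (Y w) =
    ((8/9 : R) * 2 ^- (size y - size x))%:E)%E.
Proof.
move=> hy hxy hsz.
have e w : mu_integrand R x y (X w) (Y w) =
  (\sum_(k < (size x).+1) ((((4:R)^+k)%:E * ((`[< hit (X w) (Y w) y k >])%:R)%:E)
     + (((4:R)^+k)%:E * ((`[< hit (Y w) (X w) y k >])%:R)%:E)))%E.
  rewrite (pw2 R _ _ hxy hsz) /S2 -sumEFin; apply: eq_bigr => k _.
  by rewrite mulrDr EFinD !EFinM.
under eq_integral => w _ do rewrite e.
have mH (A B : Omega -> nat -> 'I_3) (HA : forall n (i : 'I_3), measurable [set w | A w n = i])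
  (HB : forall n (i : 'I_3), measurable [set w | B w n = i]) k :
  measurable [set w | hit (A w) (B w) y k].
  have -> : [set w | hit (A w) (B w) y k] =
     EXY A B y (take k y) `\` EXY A B y (take k.+1 y).
    apply/seteqP; split => w /=.
    - by move=> [h1 [h2 h3]]; split => // -[_ h4].
    - by move=> [[h1 h2] h3]; split => //; split => // h4; apply: h3.
  by apply: measurableD; apply: measurableI; apply: measurable_ext.
rewrite ge0_integral_sum //; last first.
- move=> k w _; apply: adde_ge0; apply: term_ge0; exact: exprn_ge0.
- move=> k; apply: emeasurable_funD; apply: meas_term; exact: mH.
have eint (k : 'I_(size x).+1) :
  (\int[P]_w ((((4:R)^+k)%:E * ((`[< hit (X w) (Y w) y k >])%:R)%:E)
     + (((4:R)^+k)%:E * ((`[< hit (Y w) (X w) y k >])%:R)%:E)) =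
   ((4:R)^+k * (walk_prob R y * walk_prob R (take k y) - walk_prob R y * walk_prob R (take k.+1 y))
   + (4:R)^+k * (walk_prob R y * walk_prob R (take k y) - walk_prob R y * walk_prob R (take k.+1 y)))%:E)%E.
  rewrite ge0_integralD //; try (by move=> w _; apply: term_ge0; apply: exprn_ge0);
    try (by apply: meas_term; exact: mH).
  rewrite !(int_indT P) //; try exact: mH; try exact: exprn_ge0.
  rewrite (P_hit HXmeas HYmeas Hlaw) (P_hit HYmeas HXmeas (Hlaw_swap Hlaw)).
  by rewrite -!EFinM -EFinD.
rewrite (eq_bigr _ (fun k _ => eint k)) sumEFin arith2 //.
Qed.

End Main.

Unset Implicit Arguments. Set Strict Implicit.

Theorem mainTheorem4 (R : realType) (d : measure_display) (Omega : measurableType d)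
  (P : probability Omega R) (X Y : Omega -> nat -> 'I_3)
  (HXray : forall w, is_ray (X w)) (HYray : forall w, is_ray (Y w))
  (HXmeas : forall n (i : 'I_3), measurable [set w | X w n = i])
  (HYmeas : forall n (i : 'I_3), measurable [set w | Y w n = i])
  (Hlaw : forall u v : seq 'I_3, size u = size v ->
     P [set w | ray_prefix (X w) (size u) = u /\ ray_prefix (Y w) (size v) = v]
       = (walk_prob R u * walk_prob R v)%:E)
  (x y : seq 'I_3) (hx : reduced x) (hy : reduced y) (hxy : x != y) :
  (\int[P]_w mu_integrand R x y (X w) (Y w)
     = ((8 / 9 : R) * (2 : R) ^- dist x y)%:E)%E.
Proof.
have [c1 c2 c3 c4] := lcp_spec x y.
case: (eqVneq (lcp x y) (size x)) => ex.
  have ex' : x = take (size x) y by rewrite -{1}(take_size x) -ex c3 ex.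
  have hsz : (size x < size y)%N.
    rewrite ltn_neqAle -ex c2 andbT ex; apply/eqP => e.
    by move/eqP: hxy; apply; rewrite ex' e take_size.
  rewrite (case2 HXmeas HYmeas Hlaw hy ex' hsz) /dist ex.
  by congr (_ * _ ^- _)%:E; lia.
case: (eqVneq (lcp x y) (size y)) => ey.
  have ey' : y = take (size y) x by rewrite -{1}(take_size y) -ey -c3 ey.
  have hsz : (size y < size x)%N.
    rewrite ltn_neqAle -ey c1 andbT ey; apply/eqP => e.
    by move/eqP: hxy; apply; rewrite ey' e take_size.
  under eq_integral => w _ do rewrite mu_sym_xy.
  rewrite (case2 HXmeas HYmeas Hlaw hx ey' hsz) /dist ey.
  by congr (_ * _ ^- _)%:E; lia.
have cx : (lcp x y < size x)%N by rewrite ltn_neqAle ex c1.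
have cy : (lcp x y < size y)%N by rewrite ltn_neqAle ey c2.
by rewrite (case1 HXmeas HYmeas Hlaw hx hy cx cy (c4 cx cy) c3).
Qed.
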